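(* Let $\{s_n\}_{n\ge 0}$ and $\{r_n\}_{n\ge 0}$ be the little and large Schröder numbers, i.e. the sequences satisfying $(n+2)z_{n+1}=3(2n+1)z_n-(n-1)z_{n-1}$ for $n\ge 1$, with initial values $s_0=s_1=1$ and $r_0=1$, $r_1=2$ respectively. Then both $\{s_n\}_{n\ge 0}$ and $\{r_n\}_{n\ge0}$ are log-convex.
   Context: A sequence $a_0,a_1,\ldots$ of nonnegative real numbers is log-convex if $a_{k-1}a_{k+1}\ge a_k^2$ for all $k\ge 1$. *)

(* Defs.v *)
From Stdlib Require Import Reals.
Open Scope R_scope.

Definition log_convex (a : nat -> R) : Prop :=
  (forall n : nat, 0 <= a n) /\
  (forall k : nat, (1 <= k)%nat -> a (k - 1)%nat * a (k + 1)%nat >= (a k) ^ 2).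

Definition schroder_rec (z : nat -> R) : Prop :=
  forall n : nat, (1 <= n)%nat ->
    (INR n + 2) * z (n + 1)%nat = 3 * (2 * INR n + 1) * z n - (INR n - 1) * z (n - 1)%nat.

(* Main.v *)
Require Import Defs.
From Stdlib Require Import Reals Lra Lia Psatz.
Open Scope R_scope.

Definition Pinv (z : nat -> R) (m : nat) : Prop :=
  0 < z m /\ z (m+1)%nat >= 3 * z m /\ z (m+2)%nat >= 3 * z (m+1)%nat /\
  z m * z (m+2)%nat >= z (m+1)%nat ^ 2.

Lemma rec_at (z : nat -> R) (n : nat) : schroder_rec z ->
  (INR n + 4) * z (n+3)%nat = 3 * (2 * INR n + 5) * z (n+2)%nat - (INR n + 1) * z (n+1)%nat.
Proof.
  intros H. specialize (H (n+2)%nat ltac:(lia)).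
  replace (n+2+1)%nat with (n+3)%nat in H by lia.
  replace (n+2-1)%nat with (n+1)%nat in H by lia.
  rewrite plus_INR in H. simpl in H. lra.
Qed.

Lemma inv_all (z : nat -> R) : schroder_rec z -> 0 < z 1%nat ->
  forall m, Pinv z (m+1)%nat.
Proof.
  intros H H1. induction m as [|m IH].
  - pose proof (rec_at z 0 H) as H3. simpl in H3.
    pose proof (H 1%nat (le_n 1)) as H2. simpl in H2.
    unfold Pinv; simpl. assert (E2 : z 2%nat = 3 * z 1%nat) by lra. assert (E3 : z 3%nat = 11 * z 1%nat) by lra. rewrite E3, E2. split; [lra|split;[lra|split;[lra|nra]]].
  - destruct IH as [Ha [Hb [Hc Hd]]].
    pose proof (rec_at z (m+1) H) as R0.
    pose proof (rec_at z m H) as R1.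
    replace (m+1+3)%nat with (S m + 1 + 2)%nat in R0 by lia.
    replace (m+1+2)%nat with (S m + 1 + 1)%nat in R0 by lia.
    replace (m+1+1)%nat with (S m + 1)%nat in R0 by lia.
    replace (m+3)%nat with (S m + 1 + 1)%nat in R1 by lia.
    replace (m+2)%nat with (S m + 1)%nat in R1 by lia.
    replace (m+1+1)%nat with (S m + 1)%nat in Hb, Hc, Hd by lia.
    replace (m+1+2)%nat with (S m + 1 + 1)%nat in Hc, Hd by lia.
    rewrite plus_INR in R0. simpl INR in R0.
    set (a := z (m+1)%nat) in *.
    set (b := z (S m + 1)%nat) in *.
    set (c := z (S m + 1 + 1)%nat) in *.
    set (d := z (S m + 1 + 2)%nat) in *.
    assert (Hn : 0 <= INR m) by apply pos_INR.
    unfold Pinv. fold b.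
    replace (S m + 1 + 1)%nat with (S m + 1 + 1)%nat by reflexivity.
    fold c. fold d.
    assert (Hbp : 0 < b) by lra.
    assert (Hd3 : d >= 3 * c).
    { assert ((INR m + 5) * d >= (INR m + 5) * (3 * c)) by nra. nra. }
    split; [lra|split; [lra|split; [lra|]]].
    set (n := INR m + 2).
    assert (Hrel : (n+2) * c = 3*(2*n+1)*b - (n-1)*a) by (unfold n; lra).
    assert (Hrel2 : (n+3) * d = 3*(2*n+3)*c - n*b) by (unfold n; lra).
    assert (Hnp : 0 < n) by (unfold n; lra).
    assert (HG : (n+2) * ((n+3) * (b*d - c^2)) =
       n*(n+2)*(a*c - b^2) + c*(9*b - 3*a)).
    { replace ((n+2) * ((n+3) * (b*d - c^2))) with ((n+2)*(b*((n+3)*d)) - (n+3)*c*((n+2)*c)) by ring.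
      rewrite Hrel2. rewrite Hrel. ring. }
    assert (0 <= n*(n+2)*(a*c - b^2)).
    { apply Rmult_le_pos; [nra|lra]. }
    assert (0 <= c*(9*b - 3*a)) by (apply Rmult_le_pos; lra).
    assert (0 <= (n+2) * ((n+3) * (b*d - c^2))) by lra.
    assert (0 <= (n+3) * (b*d - c^2)).
    { apply (Rmult_le_reg_l (n+2)); lra. }
    assert (0 <= b*d - c^2).
    { apply (Rmult_le_reg_l (n+3)); lra. }
    replace (S m + 1 + 1)%nat with (S m + 2)%nat in * by lia.
    lra.
Qed.

Lemma lc_gen (z : nat -> R) : schroder_rec z -> z 0%nat = 1 -> 0 < z 1%nat ->
  z 2%nat >= (z 1%nat)^2 -> log_convex z.
Proof.
  intros H H0 H1 H2. pose proof (inv_all z H H1) as P. split.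
  - intros [|n]. lra. destruct (P n) as [Hp _]. replace (S n) with (n+1)%nat by lia. lra.
  - intros [|k] Hk. lia. destruct k as [|k].
    + simpl. rewrite H0. lra.
    + destruct (P k) as [_ [_ [_ Hd]]].
      replace (S (S k) - 1)%nat with (k+1)%nat by lia.
      replace (S (S k) + 1)%nat with (k+1+2)%nat by lia.
      replace (S (S k)) with (k+1+1)%nat by lia. exact Hd.
Qed.

Theorem corollary3p13 (s r : nat -> R) :
  schroder_rec s -> s 0%nat = 1 -> s 1%nat = 1 ->
  schroder_rec r -> r 0%nat = 1 -> r 1%nat = 2 ->
  log_convex s /\ log_convex r.
Proof.
  intros Hs s0 s1 Hr r0 r1.
  pose proof (Hs 1%nat (le_n 1)) as S2. pose proof (Hr 1%nat (le_n 1)) as R2.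
  simpl in S2, R2.
  split; apply lc_gen; auto; try lra.
  - rewrite s1 in *. lra.
  - rewrite r1 in *. lra.
Qed.
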